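(* Let $b_1,\dots,b_n$ be nonnegative integers with $\sum_{i=1}^n b_i\ge n-1$. Then for every Nash equilibrium of $(b_1,\dots,b_n)$-BG, in either the MAX or the SUM version, the underlying graph $U(G)$ of its realization $G$ is connected.
   Context: Bounded budget network creation game $(b_1,\dots,b_n)$-BG: $n$ players with integer budgets $0\le b_i\le n-1$. A strategy of player $i$ is a set $S_i\subseteq\{1,\dots,n\}\setminus\{i\}$ with $|S_i|=b_i$; a profile is realized by the directed graph $G$ on $u_1,\dots,u_n$ with an arc $\overrightarrow{u_iu_j}$ iff $j\in S_i$. $U(G)$ is the undirected multigraph obtained by ignoring directions. $\operatorname{dist}(u,v)$ is the distance in $U(G)$, defined as $n^2$ between different components. SUM cost: $c_{SUM}(u)=\sum_v\operatorname{dist}(u,v)$; MAX cost: $c_{MAX}(u)=\max_v\operatorname{dist}(u,v)+(\kappa-1)n^2$, $\kappa$ the number of components of $U(G)$. A Nash equilibrium (in a version) is a profile in which no player can decrease its cost (of that version) by changing its own strategy while the others are fixed. *)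

(* Defs.v *)
From mathcomp Require Import all_boot.
Set Implicit Arguments. Unset Strict Implicit. Unset Printing Implicit Defensive.

(* Players are u_0, ..., u_{n-1}, indexed by 'I_n.  A strategy profile assigns
   to each player i the set S i of players it buys arcs to. *)
Definition profile (n : nat) := 'I_n -> {set 'I_n}.

Definition valid_profile n (b : 'I_n -> nat) (S : profile n) : Prop :=
  forall i : 'I_n, i \notin S i /\ #|S i| = b i.

Definition adjU n (S : profile n) : rel 'I_n :=
  fun u v => (v \in S u) || (u \in S v).

Fixpoint ballU n (S : profile n) (k : nat) (u : 'I_n) : {set 'I_n} :=
  match k with
  | 0 => [set u]
  | k'.+1 => ballU S k' u :|: [set v | [exists w in ballU S k' u, adjU S w v]]
  end.

(* Distance in U(G): least k with v in ball k u (any finite distance is < n),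
   and n^2 between different components. *)
Definition distU n (S : profile n) (u v : 'I_n) : nat :=
  let k := find (fun k => v \in ballU S k u) (iota 0 n) in
  if k < n then k else n ^ 2.

Definition ncompU n (S : profile n) : nat :=
  #|[set [set v | connect (adjU S) u v] | u : 'I_n]|.

Definition cost_SUM n (S : profile n) (u : 'I_n) : nat :=
  \sum_(v : 'I_n) distU S u v.

Definition cost_MAX n (S : profile n) (u : 'I_n) : nat :=
  \max_(v : 'I_n) distU S u v + (ncompU S - 1) * n ^ 2.

Inductive version := MAXv | SUMv.

Definition cost (ver : version) n (S : profile n) (u : 'I_n) : nat :=
  match ver with MAXv => cost_MAX S u | SUMv => cost_SUM S u end.

Definition deviate n (S : profile n) (i : 'I_n) (T : {set 'I_n}) : profile n :=
  fun j => if j == i then T else S j.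

Definition nash_eq (ver : version) n (b : 'I_n -> nat) (S : profile n) : Prop :=
  valid_profile b S /\
  forall (i : 'I_n) (T : {set 'I_n}), i \notin T -> #|T| = b i ->
    cost ver S i <= cost ver (deviate S i T) i.

Definition connectedU n (S : profile n) : Prop :=
  forall u v : 'I_n, connect (adjU S) u v.

(* Main.v *)
Require Import Defs.
From mathcomp Require Import all_boot.
From mathcomp Require Import zify.
Set Implicit Arguments. Unset Strict Implicit. Unset Printing Implicit Defensive.

Lemma adjU_sym n (S : profile n) : symmetric (adjU S).
Proof. by move=> x y; rewrite /adjU orbC. Qed.

Lemma conn_sym n (S : profile n) : connect_sym (adjU S).
Proof. exact: sym_connect_sym (adjU_sym S). Qed.

Lemma ball_conn n (S : profile n) k u v :
  v \in ballU S k u -> connect (adjU S) u v.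
Proof.
elim: k v => [|k IH] v /=; first by rewrite inE => /eqP ->; exact: connect0.
rewrite inE => /orP[/IH //|]; rewrite inE => /existsP[w /andP[wb awv]].
exact: connect_trans (IH _ wb) (connect1 awv).
Qed.

Lemma path_ball n (S : profile n) u p :
  path (adjU S) u p -> last u p \in ballU S (size p) u.
Proof.
elim/last_ind: p => [|p y IH] /=; first by rewrite inE.
rewrite rcons_path => /andP[pp e]; rewrite last_rcons size_rcons /= inE.
apply/orP; right; rewrite inE; apply/existsP; exists (last u p).
by rewrite IH.
Qed.

Lemma conn_ball n (S : profile n) u v :
  connect (adjU S) u v -> exists2 k, k < n & v \in ballU S k u.
Proof.
move/connectP=> [p pp ->]; case: (shortenP pp) => p' pp' up' _.
exists (size p'); last exact: path_ball.
move: (max_card (mem (u :: p'))); rewrite card_ord (card_uniqP up') /=.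
done.
Qed.

Definition kball n (S : profile n) (u v : 'I_n) :=
  find (fun k => v \in ballU S k u) (iota 0 n).

Lemma kball_lt n (S : profile n) u v : connect (adjU S) u v ->
  kball S u v < n /\ v \in ballU S (kball S u v) u.
Proof.
case/conn_ball => k kn kb.
have H : has (fun k => v \in ballU S k u) (iota 0 n).
  by apply/hasP; exists k; rewrite ?mem_iota.
have lt : kball S u v < n by move: (H); rewrite has_find size_iota.
split => //; have := nth_find 0 H; rewrite nth_iota //.
Qed.

Lemma kball_min n (S : profile n) u v k : k < kball S u v -> v \notin ballU S k u.
Proof.
move=> hk; have := before_find 0 hk.
have kn : k < n.
  by apply: leq_trans hk _; have := find_size (fun k => v \in ballU S k u) (iota 0 n); rewrite size_iota.
by rewrite nth_iota // add0n => ->.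
Qed.

Lemma distU_conn n (S : profile n) u v :
  connect (adjU S) u v -> distU S u v = kball S u v.
Proof. by move/kball_lt=> [lt _]; rewrite /distU -/(kball S u v) lt. Qed.

Lemma distU_nconn n (S : profile n) u v :
  ~~ connect (adjU S) u v -> distU S u v = n ^ 2.
Proof.
move=> nc; rewrite /distU -/(kball S u v); case: ifP => // lt.
have H : has (fun k => v \in ballU S k u) (iota 0 n) by rewrite has_find size_iota.
have := nth_find 0 H; rewrite nth_iota // add0n => /ball_conn.
by rewrite (negbTE nc).
Qed.

Lemma distU_le n (S : profile n) u v : distU S u v <= n ^ 2.
Proof.
have n0 : 0 < n := leq_ltn_trans (leq0n u) (ltn_ord u).
rewrite /distU -/(kball S u v); case: ifP => // h; nia.
Qed.

Definition rt n (S : profile n) (v : 'I_n) := odflt v [pick x | connect (adjU S) x v].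

Lemma rt_conn n (S : profile n) v : connect (adjU S) (rt S v) v.
Proof. by rewrite /rt; case: pickP => [x //|/(_ v)]; rewrite connect0. Qed.

Lemma rt_eq n (S : profile n) u v : connect (adjU S) u v -> rt S u = rt S v.
Proof.
move=> uv; rewrite /rt.
have E : (fun x => connect (adjU S) x u) =1 (fun x => connect (adjU S) x v).
  move=> x /=; apply/idP/idP => h; first exact: connect_trans h uv.
  by apply: connect_trans h _; rewrite conn_sym.
rewrite (eq_pick E); case: pickP => // /(_ v); by rewrite connect0.
Qed.

Lemma rt_rt n (S : profile n) v : rt S (rt S v) = rt S v.
Proof. exact: rt_eq (rt_conn S v). Qed.

Definition par n (S : profile n) (v : 'I_n) :=
  odflt v [pick w | (w \in ballU S (kball S (rt S v) v).-1 (rt S v)) && adjU S w v].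

Definition dep n (S : profile n) (v : 'I_n) := kball S (rt S v) v.

Lemma par_spec n (S : profile n) v : rt S v != v ->
  adjU S (par S v) v /\ kball S (rt S v) (par S v) < dep S v.
Proof.
move=> nr; rewrite /dep /par; set u := rt S v in nr *.
have cv : connect (adjU S) u v := rt_conn S v.
case: (kball_lt cv) => _ inb; set K := kball S u v in inb *.
have K0 : 0 < K.
  rewrite lt0n; apply/negP => /eqP K0; move: inb; rewrite K0 /= inE => /eqP vu.
  by move: nr; rewrite vu eqxx.
have nb : v \notin ballU S K.-1 u by apply: kball_min; rewrite prednK.
have [w wb wv] : exists2 w, w \in ballU S K.-1 u & adjU S w v.
  move: inb; rewrite -{1}(prednK K0) /= inE (negbTE nb) /= inE.
  by move=> /existsP[w /andP[]]; exists w.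
case: pickP => [x /andP[xb xv] | /(_ w)]; last by rewrite wb wv.
split => //; rewrite ltnNge; apply/negP => h.
have : K.-1 < kball S u x by rewrite (leq_trans _ h) // prednK.
by move/kball_min; rewrite xb.
Qed.

Lemma rt_par n (S : profile n) v : rt S v != v -> rt S (par S v) = rt S v.
Proof. by move/par_spec=> [a _]; apply: rt_eq; apply: connect1. Qed.

Lemma dep_par n (S : profile n) v : rt S v != v -> dep S (par S v) < dep S v.
Proof. move=> nr; rewrite {1}/dep (rt_par nr); exact: (par_spec nr).2. Qed.

Definition tarc n (S : profile n) (v : 'I_n) : 'I_n * 'I_n :=
  if v \in S (par S v) then (par S v, v) else (v, par S v).

Lemma tarc_in n (S : profile n) v : rt S v != v -> (tarc S v).2 \in S (tarc S v).1.
Proof.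
move=> nr; have := (par_spec nr).1; rewrite /tarc /adjU.
by case: ifP => //= h; rewrite orbF.
Qed.

Lemma tarc_inj n (S : profile n) :
  {in [set v | rt S v != v] &, injective (tarc S)}.
Proof.
move=> v v'; rewrite !inE => nr nr'; have d1 := dep_par nr; have d2 := dep_par nr'.
rewrite /tarc; case: ifP => _; case: ifP => _ [] //.
- by move=> e1 e2; move: d1 d2; rewrite e1 -e2; lia.
- by move=> e1 e2; move: d1 d2; rewrite e2 -e1; lia.
Qed.

Lemma card_arcs n (S : profile n) :
  #|[set a : 'I_n * 'I_n | a.2 \in S a.1]| = \sum_(i < n) #|S i|.
Proof.
rewrite -sum1dep_card.
rewrite [RHS](eq_bigr (fun i => \sum_(j in S i) 1)); last by move=> i _; rewrite sum1_card.
by rewrite pair_big_dep /=; apply: eq_bigl => a.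
Qed.

Lemma nconn_imset n (S S' : profile n) i w :
  (forall x y, connect (adjU S) x y -> connect (adjU S') x y) ->
  ~~ connect (adjU S) i w -> connect (adjU S') i w ->
  ncompU S' < ncompU S.
Proof.
move=> sub niw ciw; rewrite /ncompU.
set C := fun u => [set v | connect (adjU S) u v].
set C' := fun u => [set v | connect (adjU S') u v].
have CE : forall (T : profile n) x y, connect (adjU T) x y ->
   [set v | connect (adjU T) x v] = [set v | connect (adjU T) y v].
  move=> T x y xy; apply/setP => z; rewrite !inE; apply/idP/idP => h.
    by apply: connect_trans h; rewrite conn_sym.
  exact: connect_trans xy h.
pose h (X : {set 'I_n}) := C' (odflt i [pick x in X]).
have hC : forall u, h (C u) = C' u.
  move=> u; rewrite /h; case: pickP => [x | /(_ u)]; last by rewrite inE connect0.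
  rewrite inE => ux; rewrite /C' (CE _ _ _ (sub _ _ ux)) //.
have -> : [set C' u | u : 'I_n] = [set h x | x in [set C u | u : 'I_n]].
  rewrite -imset_comp; apply: eq_imset => u /=; by rewrite hC.
rewrite ltn_neqAle leq_imset_card andbT; apply/negP => /imset_injP hinj.
have e : C i = C w.
  apply: hinj; rewrite ?imset_f //; rewrite !hC /C'; exact: CE.
have : w \in C w by rewrite inE connect0.
by rewrite -e inE (negbTE niw).
Qed.

Lemma preserve n (S S' : profile n) (a : 'I_n * 'I_n) :
  a \notin [set tarc S v | v in [set v | rt S v != v]] ->
  (forall x y, y \in S x -> (x, y) != a -> y \in S' x) ->
  forall x y, connect (adjU S) x y -> connect (adjU S') x y.
Proof.
move=> na arc.
have root : forall v, connect (adjU S') (rt S v) v.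
  move=> v; move: {2}(dep S v).+1 (ltnSn (dep S v)) => m.
  elim: m v => [//|m IH] v dv.
  case: (eqVneq (rt S v) v) => [-> | nr]; first exact: connect0.
  have dp := dep_par nr.
  have := IH (par S v) (leq_trans dp _); rewrite (rt_par nr) => /(_ _) h.
  have {}h := h ltac:(lia).
  apply: connect_trans h (connect1 _).
  have ta := tarc_in nr.
  have ne : tarc S v != a.
    by apply/eqP => e; move: na; rewrite -e imset_f // inE.
  have := arc _ _ ta; rewrite -surjective_pairing => /(_ ne).
  rewrite /tarc; case: ifP => _ /= h'; rewrite /adjU h' ?orbT //.
move=> x y xy.
have h1 : connect (adjU S') x (rt S x) by rewrite conn_sym.
have h2 : connect (adjU S') (rt S x) y by rewrite (rt_eq xy).
exact: connect_trans h1 h2.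
Qed.

Theorem mainTheorem13 (n : nat) (b : 'I_n -> nat)
  (hb : forall i, b i <= n - 1)
  (hsum : n - 1 <= \sum_(i < n) b i)
  (ver : version) (S : profile n) :
  nash_eq ver b S -> connectedU S.
Proof.
move=> [val ne] u v; apply/negPn/negP => nuv.
have n0 : 0 < n := leq_ltn_trans (leq0n u) (ltn_ord u).
set NR := [set x | rt S x != x].
set A := [set a : 'I_n * 'I_n | a.2 \in S a.1].
have cardA : n - 1 <= #|A|.
  rewrite card_arcs (eq_bigr b) // => i _; by case: (val i).
set R := [set x | rt S x == x].
have ruv : rt S u != rt S v.
  apply/eqP => e; move/negP: nuv; apply.
  have h1 : connect (adjU S) u (rt S u) by rewrite conn_sym rt_conn.
  by rewrite e in h1; apply: connect_trans h1 (rt_conn S v).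
have cR : 2 <= #|R|.
  have <- : #|[set rt S u; rt S v]| = 2 by rewrite cards2 ruv.
  apply: subset_leq_card; apply/subsetP => x; rewrite !inE => /orP[] /eqP ->;
    by rewrite rt_rt.
have cNR : #|NR| + 2 <= n.
  have := cardsC R; rewrite card_ord.
  have -> : ~: R = NR by apply/setP => x; rewrite !inE.
  lia.
have cimg : #|[set tarc S x | x in NR]| = #|NR| := card_in_imset (@tarc_inj _ S).
have : ~~ (A \subset [set tarc S x | x in NR]).
  apply/negP => /subset_leq_card; lia.
case/subsetPn => [[i j]]; rewrite inE /= => jS naT.
have [w nw] : exists w, ~~ connect (adjU S) i w.
  case: (boolP (connect (adjU S) i u)) => h; last by exists u.
  exists v; apply/negP => h'; move/negP: nuv; apply.
  by apply: connect_trans h'; rewrite conn_sym.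
have wS : w \notin S i.
  apply/negP => h; move/negP: nw; apply; apply: connect1; by rewrite /adjU h.
set T := w |: (S i :\ j).
have iT : i \notin T.
  rewrite !inE negb_or negb_and (proj1 (val i)) orbT andbT.
  by apply/eqP => e; move: nw; rewrite e connect0.
have cT : #|T| = b i.
  rewrite cardsU1 !inE (negbTE wS) andbF /= -(proj2 (val i)) (cardsD1 j (S i)) jS.
  by [].
have ncost := ne i T iT cT.
set S' := deviate S i T.
have arc : forall x y, y \in S x -> (x, y) != (i, j) -> y \in S' x.
  move=> x y yS ne'; rewrite /S' /deviate; case: eqP => [ex|//]; subst x.
  rewrite !inE yS andbT; apply/orP; right.
  by apply: contraNneq ne' => ->.
have pres := preserve naT arc.
have ciw : connect (adjU S') i w.
  apply: connect1; by rewrite /adjU /S' /deviate eqxx !inE eqxx.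
clear ne; case: ver ncost => /= ncost.
- rewrite /cost_MAX in ncost.
  have hc := nconn_imset pres nw ciw.
  have c1 : 0 < ncompU S'.
    rewrite /ncompU card_gt0; apply/set0Pn.
    by exists [set x | connect (adjU S') i x]; apply: imset_f.
  have m1 : \max_x distU S' i x <= n ^ 2.
    by apply/bigmax_leqP => x _; exact: distU_le.
  have m2 : n ^ 2 <= \max_x distU S i x.
    by rewrite -(distU_nconn nw); exact: leq_bigmax.
  move: ncost m1 m2 hc c1.
  move: (\max_x distU S' i x) (\max_x distU S i x) (ncompU S') (ncompU S) => a b' c d.
  nia.
- rewrite /cost_SUM in ncost.
  have key : forall x, x != w -> distU S' i x <= distU S i x + (n - 1).
    move=> x _; case: (boolP (connect (adjU S) i x)) => h.
      have h' := pres _ _ h; rewrite (distU_conn h'); have := kball_lt h'; lia.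
    rewrite (distU_nconn h); have := distU_le S' i x; lia.
  have dw : distU S' i w <= n - 1.
    by rewrite distU_conn //; have := kball_lt ciw; lia.
  rewrite (bigD1 w) //= [X in _ <= X](bigD1 w) //= (distU_nconn nw) in ncost.
  rewrite -/S' in ncost.
  have := @leq_sum _ (index_enum _) (fun x => x != w) _ _ key; rewrite big_split /= sum_nat_cond_const.
  have : #|[set x | x != w]| <= n by have := max_card (mem [set x | x != w]); rewrite card_ord.
  move: ncost dw.
  move: (\sum_(x | x != w) distU S' i x) (\sum_(x | x != w) distU S i x) => a b'.
  move: (#|[set x | x != w]|) => c.
  nia.
Qed.
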